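(* Let $G$ be a finite graph with $v$ vertices and girth $\ell(G)$ (the length of a shortest cycle of $G$, with $\ell(G)=\infty$ if $G$ has no cycle). Let $m\ge 3$ and $0<i<\ell(G)$. Then $H^{i,j}_{\mathcal A_m}(G)=0$ for every $j\ge (m-1)(v-i)$.
   Context: For $m\ge 2$ let $\mathcal A_m=\mathbb Z[x]/(x^m)$. For a finite graph $G$ with vertex set $V(G)$, edge set $E(G)$ (with a fixed total order), and $s\subseteq E(G)$, let $[G:s]$ be the spanning subgraph with vertex set $V(G)$ and edge set $s$, and $k(s)$ its number of connected components. An enhanced state is a pair $(s,c)$ where $s\subseteq E(G)$ and $c$ assigns to each component $C$ of $[G:s]$ an exponent $c(C)\in\{0,\dots,m-1\}$ (i.e. a weight $x^{c(C)}$); its bidegree is $(i,j)=(|s|,\sum_C c(C))$. The cochain group $C^{i,j}_{\mathcal A_m}(G)$ is the free abelian group on enhanced states of bidegree $(i,j)$ (equivalently the degree-$j$ part of $\bigoplus_{|s|=i}\mathcal A_m^{\otimes k(s)}$, one tensor factor per component). The differential $d:C^{i,j}\to C^{i+1,j}$ is $d=\sum_{e\notin s}(-1)^{|\{f\in s: f<e\}|}d_e$, where for $e\notin s$: if $e$ joins two different components $C_1,C_2$ of $[G:s]$, then $d_e(s,c)$ is the enhanced state on $s\cup\{e\}$ in which the merged component gets weight $x^{c(C_1)}x^{c(C_2)}$ in $\mathcal A_m$ (so $d_e(s,c)=0$ if $c(C_1)+c(C_2)\ge m$) and all other components keep their weights; if both endpoints of $e$ lie in the same component of $[G:s]$, $d_e(s,c)$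 is the enhanced state on $s\cup\{e\}$ with the same weights (identity map). $H^{i,j}_{\mathcal A_m}(G)$ denotes the cohomology of this complex (chromatic graph cohomology with algebra $\mathcal A_m$). *)

(* Defs.v *)
(* Chromatic graph cohomology with algebra A_m = Z[x]/(x^m). *)
From mathcomp Require Import all_boot all_order all_algebra.
Set Implicit Arguments.
Unset Strict Implicit.
Unset Printing Implicit Defensive.
Import GRing.Theory.
Local Open Scope ring_scope.

(* A finite graph (loops and multiple edges allowed) with vertex set 'I_n and
   edge set 'I_k; the edge e joins the two vertices of [ends e].  The fixed
   total order on edges is the natural order of 'I_k. *)

Definition joins (n k : nat) (ends : 'I_k -> 'I_n * 'I_n) (e : 'I_k) (x y : 'I_n) : bool :=
  (ends e == (x, y)) || (ends e == (y, x)).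

Definition has_cycle_of_length (n k : nat) (ends : 'I_k -> 'I_n * 'I_n) (l : nat) : Prop :=
  (0 < l)%N /\
  exists (vs : 'I_l -> 'I_n) (es : 'I_l -> 'I_k),
    injective vs /\ injective es /\
    forall j : 'I_l, joins ends (es j) (vs j) (vs (ordS j)).

Definition adj (n k : nat) (ends : 'I_k -> 'I_n * 'I_n) (s : {set 'I_k}) : rel 'I_n :=
  fun x y => [exists e in s, joins ends e x y].

Definition comp (n k : nat) (ends : 'I_k -> 'I_n * 'I_n) (s : {set 'I_k}) (x : 'I_n)
  : {set 'I_n} := [set y | connect (adj ends s) x y].

Definition comps (n k : nat) (ends : 'I_k -> 'I_n * 'I_n) (s : {set 'I_k})
  : {set {set 'I_n}} := [set comp ends s x | x : 'I_n].

(* Candidate enhanced states: an edge set s and a weight exponent in 'I_m for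
   every vertex set; a state is valid when the weight is 0 on every vertex set
   that is not a component of [G:s] (so valid states = enhanced states). *)
Definition State (n k m : nat) : finType :=
  ({set 'I_k} * {ffun {set 'I_n} -> 'I_m})%type.

Definition valid (n k m : nat) (ends : 'I_k -> 'I_n * 'I_n) (st : State n k m) : bool :=
  [forall C : {set 'I_n}, (C \notin comps ends st.1) ==> (nat_of_ord (st.2 C) == 0%N)].

Definition deg_i (n k m : nat) (st : State n k m) : nat := #|st.1|.

Definition deg_j (n k m : nat) (ends : 'I_k -> 'I_n * 'I_n) (st : State n k m) : nat :=
  (\sum_(C in comps ends st.1) nat_of_ord (st.2 C))%N.

(* the per-edge map d_e on a basis state (None = 0) *)
Definition d_e (n k m : nat) (ends : 'I_k -> 'I_n * 'I_n) (e : 'I_k) (st : State n k m)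
  : option (State n k m) :=
  let s := st.1 in let w := st.2 in
  let Ca := comp ends s (ends e).1 in
  let Cb := comp ends s (ends e).2 in
  if Ca == Cb then Some (e |: s, w)
  else if (m <= w Ca + w Cb)%N then None
  else Some (e |: s,
             [ffun C => if C == Ca :|: Cb then insubd (w Ca) (w Ca + w Cb)%N
                        else if (C == Ca) || (C == Cb) then insubd (w Ca) 0%N
                        else w C]).

Definition dcoef (n k m : nat) (ends : 'I_k -> 'I_n * 'I_n) (st t : State n k m) : int :=
  \sum_(e < k | e \notin st.1)
     (-1) ^+ #|[set f in st.1 | (f < e)%N]| * (if d_e ends e st == Some t then 1 else 0).

(* cochains: integer combinations of basis states *)
Definition dmap (n k m : nat) (ends : 'I_k -> 'I_n * 'I_n) (x : {ffun State n k m -> int})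
  : {ffun State n k m -> int} :=
  [ffun t => \sum_(st : State n k m) x st * dcoef ends st t].

Definition in_cochain (n k m : nat) (ends : 'I_k -> 'I_n * 'I_n) (i j : nat)
  (x : {ffun State n k m -> int}) : Prop :=
  forall st, x st != 0 -> [&& valid ends st, deg_i st == i & deg_j ends st == j].

Definition H_vanishes (n k m : nat) (ends : 'I_k -> 'I_n * 'I_n) (i j : nat) : Prop :=
  forall x : {ffun State n k m -> int},
    in_cochain ends i j x -> (forall t, dmap ends x t = 0) ->
    exists y : {ffun State n k m -> int},
      in_cochain ends i.-1 j y /\ forall t, dmap ends y t = x t.

(* Main.v *)
Require Import Defs.
From mathcomp Require Import all_boot all_order all_algebra.
From mathcomp Require Import zify.

Module Part1.
Set Implicit Arguments.
Unset Strict Implicit.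
Unset Printing Implicit Defensive.

Section Conn.
Variables (n k : nat) (ends : 'I_k -> 'I_n * 'I_n).

Implicit Types (X Y : {set 'I_k}) (e f : 'I_k) (x y : 'I_n).
Definition conn (X : {set 'I_k}) := connect (adj ends X).
Definition internal (X : {set 'I_k}) (e : 'I_k) := conn X (ends e).1 (ends e).2.

Lemma joinsC e x y : joins ends e x y = joins ends e y x.
Proof. by rewrite /joins orbC. Qed.

Lemma joins_ends e : joins ends e (ends e).1 (ends e).2.
Proof. by rewrite /joins; case: (ends e) => a b /=; rewrite eqxx. Qed.

Lemma joinsP e x y : joins ends e x y ->
  (x = (ends e).1 /\ y = (ends e).2) \/ (x = (ends e).2 /\ y = (ends e).1).
Proof.
rewrite /joins; case: (ends e) => a b /=.
by case/orP => /eqP [-> ->]; [left|right].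
Qed.

Lemma adjC X : symmetric (adj ends X).
Proof.
move=> x y; apply/existsP/existsP => -[e /andP[He J]]; exists e;
  by rewrite He -joinsC.
Qed.

Lemma connC X x y : conn X x y = conn X y x.
Proof. exact: (sym_connect_sym (adjC X)). Qed.

Lemma conn_trans X x y z : conn X x y -> conn X y z -> conn X x z.
Proof. exact: connect_trans. Qed.

Lemma conn_refl X x : conn X x x.
Proof. exact: connect0. Qed.

Lemma conn_edge (X : {set 'I_k}) e : e \in X -> internal X e.
Proof.
move=> He; apply: connect1; apply/existsP; exists e; by rewrite He joins_ends.
Qed.

Lemma conn_mono (X Y : {set 'I_k}) : X \subset Y -> forall a b, conn X a b -> conn Y a b.
Proof.
move=> sXY; apply: connect_sub => x y /existsP [e /andP[He J]].
apply: connect1; apply/existsP; exists e; by rewrite (subsetP sXY _ He).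
Qed.

Lemma conn_add X f a b :
  conn (f |: X) a b =
  [|| conn X a b,
      conn X a (ends f).1 && conn X (ends f).2 b
    | conn X a (ends f).2 && conn X (ends f).1 b].
Proof.
set u := (ends f).1; set v := (ends f).2.
have cuv : conn (f |: X) u v by apply: conn_edge; rewrite setU11.
have sX : X \subset f |: X by apply/subsetP => z Hz; rewrite setU1r.
apply/idP/idP; last first.
  case/or3P => [H|/andP[H1 H2]|/andP[H1 H2]].
  - exact: conn_mono H.
  - apply: conn_trans (conn_mono sX H1) _; apply: conn_trans cuv (conn_mono sX H2).
  - apply: conn_trans (conn_mono sX H1) _; rewrite connC in cuv.
    apply: conn_trans cuv (conn_mono sX H2).
case/connectP => p Hp ->.
elim: p a Hp => [|y p IH] a /=; first by rewrite conn_refl.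
case/andP => Hay /IH {IH} Hy.
case/existsP: Hay => e /andP[He J].
case/setU1P: He => [Ef|HeX].
  subst e; have cr := conn_refl X.
  case/joinsP: J => -[Ea Ey]; rewrite -/u -/v in Ea Ey; subst a y;
  case/or3P: Hy => [H|/andP[H1 H2]|/andP[H1 H2]].
  - by rewrite cr H orbT.
  - by rewrite cr H2 orbT.
  - by rewrite H2.
  - by rewrite cr H !orbT.
  - by rewrite H2.
  - by rewrite cr H2 !orbT.
have Hxy : conn X a y.
  by apply: connect1; apply/existsP; exists e; rewrite HeX.
case/or3P: Hy => [H|/andP[H1 H2]|/andP[H1 H2]].
- by rewrite (conn_trans Hxy H).
- by rewrite (conn_trans Hxy H1) H2 orbT.
- by rewrite (conn_trans Hxy H1) H2 !orbT.
Qed.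


Lemma compE X x y : (y \in Defs.comp ends X x) = conn X x y.
Proof. by rewrite /comp inE. Qed.

Lemma comp_self X x : x \in Defs.comp ends X x.
Proof. by rewrite compE conn_refl. Qed.

Lemma comp_eqP X x y : (Defs.comp ends X x == Defs.comp ends X y) = conn X x y.
Proof.
apply/eqP/idP => [E|H].
  by rewrite -compE E comp_self.
apply/setP => z; rewrite !compE; apply/idP/idP => Hz.
  by apply: conn_trans Hz; rewrite connC.
exact: conn_trans H Hz.
Qed.

Lemma comp_mem X x y : y \in Defs.comp ends X x -> Defs.comp ends X y = Defs.comp ends X x.
Proof. by rewrite compE connC -comp_eqP => /eqP. Qed.

Lemma in_comps X x : Defs.comp ends X x \in comps ends X.
Proof. exact: imset_f. Qed.

Lemma compsP X C : reflect (exists x, C = Defs.comp ends X x) (C \in comps ends X).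
Proof. by apply: (iffP imsetP) => [[x _ ->]|[x ->]]; exists x. Qed.

Lemma comp_add X f x :
  let Ca := Defs.comp ends X (ends f).1 in let Cb := Defs.comp ends X (ends f).2 in
  Defs.comp ends (f |: X) x = if x \in Ca :|: Cb then Ca :|: Cb else Defs.comp ends X x.
Proof.
move=> Ca Cb; apply/setP => y; rewrite compE conn_add.
case: ifP; rewrite !inE -/(conn X).
  have cx := conn_trans; have cC := connC X.
  case/orP => Hx; apply/idP/idP.
  - case/or3P => [H|/andP[H1 H2]|/andP[H1 H2]].
    + by rewrite (cx _ _ _ _ Hx H).
    + by rewrite H2 orbT.
    + by rewrite H2.
  - case/orP => H.
      by rewrite (cx _ _ _ _ _ H) // cC.
    by rewrite (cC x (ends f).1) Hx H orbT.
  - case/or3P => [H|/andP[H1 H2]|/andP[H1 H2]].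
    + by rewrite (cx _ _ _ _ Hx H) orbT.
    + by rewrite H2 orbT.
    + by rewrite H2.
  - case/orP => H.
      by rewrite (cC x (ends f).2) Hx H !orbT.
    by rewrite (cx _ _ _ _ _ H) // cC.
move/negbT; rewrite negb_or => /andP[N1 N2].
by rewrite (connC X x (ends f).1) (connC X x (ends f).2) (negbTE N1) (negbTE N2) /= orbF.
Qed.

Lemma comps_add X f :
  let Ca := Defs.comp ends X (ends f).1 in let Cb := Defs.comp ends X (ends f).2 in
  forall C, (C \in comps ends (f |: X)) =
    (C == Ca :|: Cb) || [&& C \in comps ends X, C != Ca & C != Cb].
Proof.
move=> Ca Cb C; rewrite /Ca /Cb; apply/compsP/idP.
  case=> x ->; rewrite comp_add; case: ifP => [_|Hx]; first by rewrite eqxx.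
  rewrite in_comps /=; apply/orP; right; apply/andP; split.
    by apply: contraFN Hx => /eqP <-; rewrite inE comp_self.
  by apply: contraFN Hx => /eqP <-; rewrite inE comp_self orbT.
case/orP => [/eqP ->|/and3P[/compsP[x ->] Na Nb]].
  exists (ends f).1; rewrite comp_add inE comp_self //.
exists x; rewrite comp_add; case: ifP => [|//]; rewrite inE => /orP[] Hx.
  by rewrite (comp_mem Hx) eqxx in Na.
by rewrite (comp_mem Hx) eqxx in Nb.
Qed.

Lemma comps_add_int X f : internal X f -> comps ends (f |: X) = comps ends X.
Proof.
move=> Hi; have E : Defs.comp ends X (ends f).2 = Defs.comp ends X (ends f).1.
  by apply: comp_mem; rewrite compE.
apply/setP => C; rewrite comps_add E setUid.
case: (boolP (C == _)) => [/eqP ->|] /=; first by rewrite in_comps.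
by move=> _; rewrite andbT.
Qed.

Lemma comps_add_card X f : ~~ internal X f ->
  #|comps ends (f |: X)| + 1 = #|comps ends X|.
Proof.
move=> Ni.
set Ca := Defs.comp ends X (ends f).1; set Cb := Defs.comp ends X (ends f).2.
have NE : Ca != Cb by rewrite comp_eqP.
have E : comps ends (f |: X) = (Ca :|: Cb) |: ((comps ends X :\ Ca) :\ Cb).
  apply/setP => C; rewrite comps_add !inE -/Ca -/Cb.
  by case: (C \in comps ends X); case: (C != Ca); case: (C != Cb); rewrite ?orbF ?orbT.
have NU : Ca :|: Cb != Ca.
  apply/negP => /eqP/setP /(_ (ends f).2); rewrite !inE connect0 orbT => H.
  by move: Ni; rewrite /internal /conn -H.
have Nin : (Ca :|: Cb) \notin ((comps ends X :\ Ca) :\ Cb).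
  rewrite !inE; apply/negP => /and3P[_ _ /compsP[x Ex]].
  have : (ends f).1 \in Defs.comp ends X x by rewrite -Ex inE comp_self.
  move/comp_mem; rewrite -/Ca => E'.
  by rewrite Ex E' eqxx in NU.
rewrite E cardsU1 Nin (cardsD1 Ca (comps ends X)) (cardsD1 Cb (comps ends X :\ Ca)).
rewrite in_comps !inE eq_sym NE in_comps /=.
by rewrite add1n addn1 add1n.
Qed.

Lemma comps_set0 : #|comps ends set0| = n.
Proof.
have E : forall x, Defs.comp ends set0 x = [set x].
  move=> x; apply/setP => y; rewrite compE inE.
  apply/idP/eqP => [|->]; last exact: conn_refl.
  case/connectP => -[|z p] /= => [_ ->//|/andP[/existsP[e]]].
  by rewrite inE.
rewrite /comps (eq_imset _ E) card_imset ?card_ord //.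
exact: set1_inj.
Qed.

Definition stepedge e0 X x y := odflt e0 [pick g in X | joins ends g x y].

Lemma stepedgeP e0 X x y : adj ends X x y ->
  stepedge e0 X x y \in X /\ joins ends (stepedge e0 X x y) x y.
Proof.
move=> /existsP [g Hg]; rewrite /stepedge; case: pickP => [h /andP[]//|/(_ g)].
by rewrite Hg.
Qed.

Lemma cycle_of_conn X e : e \notin X -> internal X e ->
  exists l, (l <= #|X|.+1)%N /\ has_cycle_of_length ends l.
Proof.
move=> NeX; rewrite /internal /conn => /connectP [p0 Hp0].
case: (shortenP Hp0) => p Hp Hu _ Hl.
set u := (ends e).1 in Hp Hu Hl *; set v := (ends e).2 in Hl *.
pose l := (size p).+1.
pose vs := fun j : 'I_l => nth u (u :: p) j.
pose es := fun j : 'I_l => if (j < size p)%N then stepedge e X (nth u (u :: p) j) (nth u (u :: p) j.+1) else e.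
have step : forall j, (j < size p)%N ->
   stepedge e X (nth u (u :: p) j) (nth u (u :: p) j.+1) \in X /\
   joins ends (stepedge e X (nth u (u :: p) j) (nth u (u :: p) j.+1)) (nth u (u :: p) j) (nth u (u :: p) j.+1).
  move=> j Hj; apply: stepedgeP; exact: (pathP u Hp).
have U : forall a b, (a < l)%N -> (b < l)%N -> (nth u (u :: p) a == nth u (u :: p) b) = (a == b).
  by move=> a b Ha Hb; apply: nth_uniq.
have es_inj : injective es.
  move=> j1 j2; rewrite /es.
  have := ltn_ord j1; have := ltn_ord j2; rewrite /l ltnS => L2 L1.
  case: ifP => H1; case: ifP => H2.
  - move=> E; have [_ J1] := step _ H1; have [_ J2] := step _ H2.
    move: J1 J2; rewrite E.
    move: (stepedge e X (nth u (u :: p) j2) (nth u (u :: p) j2.+1)) => g J1 J2.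
    apply: val_inj => /=.
    case/joinsP: J1 => -[A1 B1]; case/joinsP: J2 => -[A2 B2].
    + by apply/eqP; rewrite -(U j1 j2); [rewrite A1 A2|exact: ltn_ord|exact: ltn_ord].
    + have E1 : nth u (u :: p) j1 == nth u (u :: p) j2.+1 by rewrite A1 B2.
      have E2 : nth u (u :: p) j1.+1 == nth u (u :: p) j2 by rewrite B1 A2.
      rewrite (U j1 j2.+1) in E1; [|exact: ltn_ord|by rewrite /l ltnS].
      rewrite (U j1.+1 j2) in E2; [|by rewrite /l ltnS|exact: ltn_ord].
      move/eqP: E1; move/eqP: E2; lia.
    + have E1 : nth u (u :: p) j1 == nth u (u :: p) j2.+1 by rewrite A1 B2.
      have E2 : nth u (u :: p) j1.+1 == nth u (u :: p) j2 by rewrite B1 A2.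
      rewrite (U j1 j2.+1) in E1; [|exact: ltn_ord|by rewrite /l ltnS].
      rewrite (U j1.+1 j2) in E2; [|by rewrite /l ltnS|exact: ltn_ord].
      move/eqP: E1; move/eqP: E2; lia.
    + by apply/eqP; rewrite -(U j1 j2); [rewrite A1 A2|exact: ltn_ord|exact: ltn_ord].
  - by move=> E; have [] := step _ H1; rewrite E (negbTE NeX).
  - by move=> E; have [] := step _ H2; rewrite -E (negbTE NeX).
  - move=> _; apply: val_inj => /=.
    have F1 : (j1 : nat) = size p by apply/eqP; rewrite eqn_leq -ltnS L1 leqNgt H1.
    have F2 : (j2 : nat) = size p by apply/eqP; rewrite eqn_leq L2 leqNgt H2.
    by rewrite F1 F2.
exists l; split.
  have <- : #|[set es j | j in 'I_l]| = l by rewrite card_imset // card_ord.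
  have -> : (#|X|.+1 = #|e |: X|)%N by rewrite cardsU1 NeX.
  apply: subset_leq_card; apply/subsetP => g /imsetP [j _ ->]; rewrite /es.
  case: ifP => Hj; last by rewrite setU11.
  by have [H _] := step _ Hj; rewrite setU1r.
split; first by [].
exists vs, es; split; [|split => //].
  move=> j1 j2; rewrite /vs => /eqP; rewrite U //.
  by move/eqP/val_inj.
move=> j; rewrite /vs /es /=.
case: ifP => Hj.
  rewrite modn_small /l ?ltnS //.
  by have [_ J] := step _ Hj.
have Ej : (j : nat) = size p.
  by apply/eqP; rewrite eqn_leq -ltnS ltn_ord leqNgt Hj.
rewrite Ej /l modnn /=.
have -> : nth u (u :: p) (size p) = last u p.
  by case: (lastP p) => [//|q z]; rewrite size_rcons /= nth_rcons ltnn eqxx last_rcons.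
rewrite -Hl joinsC; exact: joins_ends.
Qed.


End Conn.


Section Girth.
Variables (n k : nat) (ends : 'I_k -> 'I_n * 'I_n) (i : nat).
Hypothesis Hg : forall l, has_cycle_of_length ends l -> (i < l)%N.
Implicit Types (X Y : {set 'I_k}) (e f g : 'I_k) (x y : 'I_n).

Lemma int_card X e : e \notin X -> internal ends X e -> (i <= #|X|)%N.
Proof.
move=> NeX Hi; have [l [Hl /Hg Hil]] := cycle_of_conn NeX Hi.
by rewrite -ltnS (leq_trans Hil Hl).
Qed.

Lemma comps_card X : (#|X| <= i)%N -> (#|comps ends X| + #|X|)%N = n.
Proof.
move Hc : #|X| => c; elim: c X Hc => [|c IH] X Hc Hci.
  by move/eqP: Hc; rewrite cards_eq0 => /eqP ->; rewrite comps_set0 addn0.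
have [e HeX] : exists e, e \in X.
  by apply/set0Pn; rewrite -card_gt0 Hc.
have HX : X = e |: (X :\ e) by rewrite setD1K.
have Hc' : #|X :\ e| = c by move: Hc; rewrite (cardsD1 e) HeX add1n => -[].
have Ni : ~~ internal ends (X :\ e) e.
  apply/negP => Hi; have NeX' : e \notin X :\ e by rewrite setD11.
  have := int_card NeX' Hi; rewrite Hc'.
  by move: Hci; lia.
have := comps_add_card Ni; rewrite -HX => E.
have H' := IH _ Hc' (ltnW Hci); rewrite -E in H'.
apply: etrans _ H'; by rewrite addn1 addSnnS.
Qed.

Definition Cyc (t : {set 'I_k}) := [forall f in t, internal ends (t :\ f) f].

Lemma conn_subst X Y g a b : internal ends Y g -> X :\ g \subset Y ->
  conn ends X a b -> conn ends Y a b.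
Proof.
move=> Hi sXY H.
have : conn ends (g |: (X :\ g)) a b.
  apply: conn_mono H; apply/subsetP => z Hz; rewrite !inE.
  by case: (z == g); rewrite ?Hz.
rewrite conn_add.
have M : forall a b, conn ends (X :\ g) a b -> conn ends Y a b := conn_mono sXY.
have cuv : conn ends Y (ends g).1 (ends g).2 := Hi.
case/or3P => [H1|/andP[H1 H2]|/andP[H1 H2]].
- exact: M H1.
- exact: connect_trans (M _ _ H1) (connect_trans cuv (M _ _ H2)).
- rewrite connC in cuv.
  exact: connect_trans (M _ _ H1) (connect_trans cuv (M _ _ H2)).
Qed.

Lemma factB X e : (#|X| <= i)%N -> e \notin X -> internal ends X e ->
  #|X| = i /\ Cyc (e |: X).
Proof.
move=> Hc NeX Hi; split.
  by apply/eqP; rewrite eqn_leq Hc (int_card NeX Hi).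
apply/forall_inP => f; case/setU1P => [->|HfX].
  by rewrite setU1K.
have Nfe : f != e by apply: contraNneq NeX => <-.
have E : (e |: X) :\ f = e |: (X :\ f).
  apply/setP => z; rewrite !inE; case: (z =P e) => [->|_]; first by rewrite eq_sym Nfe.
  by rewrite andbC.
rewrite E /internal conn_add.
have Ni : ~~ internal ends (X :\ f) e.
  have NeX' : e \notin X :\ f by rewrite !inE negb_and NeX orbT.
  apply/negP => Hi'; have := int_card NeX' Hi'.
  by move: Hc; rewrite (cardsD1 f X) HfX add1n; lia.
move: Hi; rewrite /internal.
have -> : X = f |: (X :\ f) by rewrite setD1K.
rewrite conn_add setU1K ?setD11 //.
move: Ni; rewrite /internal => /negbTE ->.
case/or3P => [//|/andP[H1 H2]|/andP[H1 H2]].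
  by rewrite (connC _ _ (ends f).1 (ends e).1) H1 (connC _ _ (ends e).2 (ends f).2) H2 orbT.
by rewrite H1 H2 !orbT.
Qed.

End Girth.

End Part1.
Import Part1.

Module Part2.
Set Implicit Arguments.
Unset Strict Implicit.
Unset Printing Implicit Defensive.

Section Cx.
Variables (n k : nat) (ends : 'I_k -> 'I_n * 'I_n) (m' i : nat).
Hypothesis Hg : forall l, has_cycle_of_length ends l -> (i < l)%N.
Implicit Types (X Y s r t : {set 'I_k}) (e f g h : 'I_k) (x y : 'I_n).
Local Notation m := m'.+3.
Local Notation St := (State n k m).

Definition topw X : {ffun {set 'I_n} -> 'I_m} :=
  [ffun C => if C \in comps ends X then ord_max else ord0].
Definition topst X : St := (X, topw X).

Lemma d_e_top s e : d_e ends e (topst s) =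
  if internal ends s e then Some (topst (e |: s)) else None.
Proof.
rewrite /d_e /= comp_eqP -/(internal ends s e).
case: ifP => Hi.
  by rewrite /topst /topw comps_add_int.
rewrite /topw !ffunE !in_comps /=.
by have -> : (m'.+3 <= m'.+2 + m'.+2)%N by lia.
Qed.

Definition Yw s e : {ffun {set 'I_n} -> 'I_m} :=
  [ffun C => if C == Defs.comp ends (s :\ e) (ends e).1 then inord 1
             else if C == Defs.comp ends (s :\ e) (ends e).2 then inord m'.+1
             else if C \in comps ends (s :\ e) then ord_max else ord0].
Definition Ys s e : St := (s :\ e, Yw s e).

Definition Wv (T : eqType) (c1 c2 z : T) : nat :=
  if z == c1 then 1%N else if z == c2 then m'.+1 else m'.+2.

Lemma Wv_lemma (T : eqType) (a b c1 c2 : T) : a != b -> c1 != c2 ->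
  (m'.+3 <= Wv c1 c2 a + Wv c1 c2 b)%N = ~~ ((a == c1) && (b == c2) || (a == c2) && (b == c1)).
Proof.
move=> Nab N12; rewrite /Wv.
case: (a =P c1) => [Ea|Na]; case: (a =P c2) => [Ea'|Na']; case: (b =P c1) => [Eb|Nb];
  case: (b =P c2) => [Eb'|Nb'] //=; subst; rewrite ?eqxx // in Nab N12 *; lia.
Qed.

Lemma Yw_val s e C : C \in comps ends (s :\ e) ->
  nat_of_ord (Yw s e C) = Wv (Defs.comp ends (s :\ e) (ends e).1) (Defs.comp ends (s :\ e) (ends e).2) C.
Proof.
move=> HC; rewrite /Yw /Wv ffunE.
case: ifP => _; first by rewrite inordK.
case: ifP => _; first by rewrite inordK.
by rewrite HC.
Qed.

Lemma d_e_Y s e g : e \in s -> (#|s :\ e| < i)%N -> g \notin s :\ e ->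
  d_e ends g (Ys s e) = if internal ends s g then Some (topst (g |: (s :\ e))) else None.
Proof.
move=> Hes Hc HgX.
have NiX : forall f, f \notin s :\ e -> ~~ internal ends (s :\ e) f.
  move=> f Hf; apply/negP => Hi; have := int_card Hg Hf Hi; lia.
have NeX : e \notin s :\ e by rewrite setD11.
rewrite /d_e /= comp_eqP -/(internal ends (s :\ e) g) (negbTE (NiX g HgX)).
set X := s :\ e in NiX NeX HgX *.
set C1 := Defs.comp ends X (ends e).1; set C2 := Defs.comp ends X (ends e).2.
set Ca := Defs.comp ends X (ends g).1; set Cb := Defs.comp ends X (ends g).2.
have N12 : C1 != C2 by rewrite comp_eqP; exact: NiX.
have Nab : Ca != Cb by rewrite comp_eqP; exact: NiX.
have Hs : s = e |: X by rewrite setD1K.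
have Hint : internal ends s g = ((Ca == C1) && (Cb == C2)) || ((Ca == C2) && (Cb == C1)).
  rewrite /internal Hs conn_add -/(internal ends X g) (negbTE (NiX g HgX)) /= -!comp_eqP.
  by rewrite -/C1 -/C2 -/Ca -/Cb (eq_sym C2) (eq_sym C1).
rewrite !Yw_val ?in_comps // -/X -/C1 -/C2 -/Ca -/Cb (Wv_lemma Nab N12) -Hint.
case: (boolP (internal ends s g)) => Hi //=.
congr Some; rewrite /topst; congr pair; apply/ffunP => C.
rewrite /topw !ffunE comps_add -/X -/Ca -/Cb.
have HC : ((Ca == C1) && (Cb == C2)) || ((Ca == C2) && (Cb == C1)) by rewrite -Hint.
case: ifP => E1.
  have HW : (Wv C1 C2 Ca + Wv C1 C2 Cb = m'.+2)%N.
    by case/orP: HC => /andP[/eqP E3 /eqP E4]; rewrite E3 E4 /Wv !eqxx (eq_sym C2 C1) (negbTE N12) /= ?addn1.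
  apply: val_inj; rewrite /= insubdK HW //; exact: ltnSn.
case: ifP => E2.
  apply: val_inj; rewrite /= insubdK //.
  by case/orP: E2 => /eqP ->; rewrite eqxx ?andbF.
move/negbT: E2; rewrite negb_or => /andP[Na Nb].
rewrite -/C1 -/C2 Na Nb andbT /=.
case/orP: HC => /andP[/eqP E3 /eqP E4]; rewrite -E3 -E4 ?(negbTE Na) ?(negbTE Nb) ?andbT //.
Qed.


End Cx.

End Part2.
Import Part2.

Module Part3.
Set Implicit Arguments.
Unset Strict Implicit.
Unset Printing Implicit Defensive.
Import GRing.Theory.
Local Open Scope ring_scope.

Lemma big1_collapse (I : finType) (F : I -> int) i0 :
  (forall i, F i != 0 -> i == i0) -> \sum_i F i = F i0.
Proof.
move=> H; rewrite (bigD1 i0) //= big1 ?addr0 // => i Hi.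
by apply/eqP; apply: contraR Hi => /H.
Qed.

Lemma big2_collapse (I J : finType) (F : I -> J -> int) i0 j0 :
  (forall i j, F i j != 0 -> (i == i0) && (j == j0)) ->
  \sum_i \sum_j F i j = F i0 j0.
Proof.
move=> H; rewrite (big1_collapse (i0 := i0)).
  apply: big1_collapse => j Hj; by case/andP: (H _ _ Hj).
move=> i; apply: contraR => Hi; apply/eqP; apply: big1 => j _.
by apply/eqP; apply: contraR Hi => /H /andP[].
Qed.

Lemma maxP k (P : pred 'I_k) : (exists x, P x) ->
  exists x, P x /\ forall y, P y -> (y <= x)%N.
Proof.
case=> x0 Px0; case: (arg_maxnP (@nat_of_ord k) Px0) => y Py Hy.
by exists y; split.
Qed.

Section Core.
Variables (n k : nat) (ends : 'I_k -> 'I_n * 'I_n) (i : nat).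
Hypothesis Hg : forall l, has_cycle_of_length ends l -> (i < l)%N.
Hypothesis Hi0 : (0 < i)%N.
Variable a : {set 'I_k} -> int.
Implicit Types (X Y s r t : {set 'I_k}) (e f g h : 'I_k).

Definition sgn X g : int := (-1) ^+ #|[set f in X | (f < g)%N]|.
Definition ismax s e := (e \in s) && [forall f in s, (f <= e)%N].
Definition nonspec s e := ~~ [exists h : 'I_k, (e < h)%N && Cyc ends (h |: s)].
Definition condY s e := [&& #|s| == i, ismax s e & nonspec s e].
Definition Tt r s e g : int :=
  if [&& condY s e, g \notin s :\ e, internal ends s g & g |: (s :\ e) == r]
  then a s * sgn (s :\ e) e * sgn (s :\ e) g else 0.

Hypothesis Hcoc : forall t, #|t| = i.+1 -> Cyc ends t ->
  \sum_(e in t) sgn (t :\ e) e * a (t :\ e) = 0.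

Lemma ismax_ex r : r != set0 -> exists e, ismax r e.
Proof.
move=> /set0Pn Hr; have [e [He Hmax]] := maxP Hr.
by exists e; rewrite /ismax He; apply/forall_inP.
Qed.

Lemma ismax_uniq r e f : ismax r e -> ismax r f -> e = f.
Proof.
case/andP => He /forall_inP Me; case/andP => Hf /forall_inP Mf.
by apply: val_inj; apply/eqP; rewrite eqn_leq Me // Mf.
Qed.

Lemma Cyc_int t e : Cyc ends t -> e \in t -> internal ends (t :\ e) e.
Proof. by move/forall_inP; apply. Qed.

Lemma Cyc_int1 r h : Cyc ends (h |: r) -> h \notin r -> internal ends r h.
Proof. by move=> C Nh; have := Cyc_int C (setU11 h r); rewrite setU1K. Qed.


Lemma Tt_struct r s e g : Tt r s e g != 0 -> g != e ->
  e \notin r /\ (forall f, f \in r -> (f < e)%N) /\ Cyc ends (e |: r) /\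
      internal ends s g /\ s = e |: (r :\ g) /\ g \in r /\ #|s| = i.
Proof.
rewrite /Tt; case: ifP => [/and4P[/and3P[/eqP Hs /andP[Hes /forall_inP Hmax] Hns] HgX Hint /eqP Er] _ Nge|]; last by rewrite eqxx.
have Ngs : g \notin s by move: HgX; rewrite !inE negb_and negbK (negbTE Nge).
have [_ Cg] := factB Hg (eq_leq Hs) Ngs Hint.
have Lge : (g < e)%N.
  rewrite ltn_neqAle; apply/andP; split; first by apply: contra Nge => /eqP E; apply/eqP/val_inj.
  rewrite leqNgt; apply: contra Hns => L; apply/existsP; exists g; by rewrite L Cg.
have NeX : e \notin s :\ e by rewrite setD11.
have Ner : e \notin r by rewrite -Er !inE negb_or negb_and negbK eqxx /= andbT; apply: contra Nge => /eqP ->.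
have E2 : r :\ g = s :\ e by rewrite -Er setU1K.
do 6?split => //.
- move=> f; rewrite -Er => /setU1P [->//|Hf].
  move: Hf; rewrite !inE => /andP[Nfe Hf].
  by rewrite ltn_neqAle Hmax // andbT; apply: contra Nfe => /eqP E; apply/eqP/val_inj.
- by rewrite -Er setUCA setD1K.
- by rewrite E2 setD1K.
- by rewrite -Er setU11.
Qed.

Lemma Tt_diag r s e : Tt r s e e != 0 -> [/\ s = r, ismax r e & nonspec r e].
Proof.
rewrite /Tt; case: ifP => [/and4P[/and3P[/eqP Hs /andP[Hes Hmax] Hns] _ _ /eqP Er] _|]; last by rewrite eqxx.
have E : r = s by rewrite -Er setD1K.
by rewrite E; split => //; apply/andP.
Qed.

Lemma sgn_sq X g : sgn X g * sgn X g = 1.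
Proof. by rewrite /sgn -exprMn mulrNN mulr1 expr1n. Qed.

Lemma sgn_all X h : (forall f, f \in X -> (f < h)%N) -> sgn X h = (-1) ^+ #|X|.
Proof.
move=> H; rewrite /sgn.
have -> : [set f in X | (f < h)%N] = X.
  by apply/setP => z; rewrite inE; case: (boolP (z \in X)) => // /H ->.
by [].
Qed.

Lemma sgn_add X g h : (g < h)%N -> sgn (h |: X) g = sgn X g.
Proof.
move=> L; rewrite /sgn.
have -> : [set f in h |: X | (f < g)%N] = [set f in X | (f < g)%N].
  apply/setP => z; rewrite !inE; case: (z =P h) => [->|] //=.
  by rewrite ltnNge ltnW // andbF.
by [].
Qed.

Lemma setD1U1 X g h : g != h -> (h |: X) :\ g = h |: (X :\ g).
Proof.
move=> N; apply/setP => z; rewrite !inE; case: (z =P h) => [->|_] //=.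
by rewrite eq_sym N.
Qed.

Lemma condY_Tt r s e g : Tt r s e g != 0 -> condY s e.
Proof. by rewrite /Tt; case: ifP => [/andP[]|] //; rewrite eqxx. Qed.

Lemma core r : #|r| = i ->
  \sum_(s : {set 'I_k}) \sum_(e < k) \sum_(g < k) Tt r s e g = a r.
Proof.
move=> Hr.
have [mr Hmr] : exists mr, ismax r mr by apply: ismax_ex; rewrite -card_gt0 Hr.
have Hmr_in : mr \in r by case/andP: Hmr.
have Hmr_le : forall f, f \in r -> (f <= mr)%N by case/andP: Hmr => _ /forall_inP.
rewrite (eq_bigr (fun s => \sum_(g < k) \sum_(e < k) Tt r s e g)); last by move=> s _; rewrite exchange_big.
rewrite exchange_big /=.
case: (boolP (nonspec r mr)) => Hns.
  transitivity (\sum_(g < k) (if g == mr then a r else 0)); last first.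
    rewrite (big1_collapse (i0 := mr)); first by rewrite eqxx.
    by move=> g; case: (g =P mr) => // _; rewrite eqxx.
  apply: eq_bigr => g _; rewrite (big2_collapse (i0 := r) (j0 := g)).
    rewrite /Tt; case: (g =P mr) => [->|Ng].
      rewrite /condY Hr eqxx Hmr Hns setD11 (conn_edge _ Hmr_in) setD1K //= eqxx.
      by rewrite -mulrA sgn_sq mulr1.
    case: ifP => // /andP[/and3P[_ Hm _] _].
    by case: Ng; apply: ismax_uniq Hm Hmr.
  move=> s e H; case: (e =P g) => [Eeg|Neg].
    by subst e; have [-> _ _] := Tt_diag H; rewrite !eqxx.
  have [Ner [Hlt [Cy _]]] := Tt_struct H (introN eqP (nesym Neg)).
  case/negP: Hns; apply/existsP; exists e; rewrite Cy andbT; exact: Hlt.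
move: (Hns); rewrite /nonspec negbK => /existsP Hex.
have [hs [/andP[Lhs Chs] Mhs]] := maxP Hex.
have Nhr : hs \notin r.
  by apply/negP => /Hmr_le; rewrite leqNgt Lhs.
have Hltr : forall f, f \in r -> (f < hs)%N.
  by move=> f /Hmr_le Hf; apply: leq_ltn_trans Hf Lhs.
have Ihs : internal ends r hs := Cyc_int1 Chs Nhr.
transitivity (\sum_(g < k) (if g \in r then a (hs |: (r :\ g)) * sgn (r :\ g) hs * sgn (r :\ g) g else 0)).
  apply: eq_bigr => g _; rewrite (big2_collapse (i0 := hs |: (r :\ g)) (j0 := hs)).
    have Nhs' : hs \notin r :\ g by rewrite !inE negb_and Nhr orbT.
    rewrite /Tt setU1K //; case: (boolP (g \in r)) => Hgr; last first.
      case: ifP => // /and4P[_ _ _ /eqP E].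
      by case/negP: Hgr; rewrite -E setU11.
    have Ngh : g != hs by apply: contraNneq Nhr => <-.
    rewrite setD11 setD1K // eqxx andbT.
    have Hint : internal ends (hs |: r :\ g) g.
      by rewrite -setD1U1 //; apply: (Cyc_int Chs); rewrite setU1r.
    rewrite Hint.
    suff -> : condY (hs |: r :\ g) hs by [].
    have Hr2 := Hr; rewrite /condY cardsU1 Nhs' (cardsD1 g r) Hgr in Hr2 *.
    rewrite -Hr2 add1n eqxx /=; apply/andP; split.
      rewrite /ismax setU11 /=; apply/forall_inP => f /setU1P [->//|].
      by rewrite !inE => /andP[_ /Hltr /ltnW].
    apply/negP => /existsP [h' /andP[Lh' Ch']].
    have Nh' : h' \notin hs |: r :\ g.
      rewrite !inE negb_or negb_and; apply/andP; split.
        by apply: contraTneq Lh' => ->; rewrite ltnn.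
      apply/orP; right; apply/negP => /Hltr L.
      by move: (ltn_trans L Lh'); rewrite ltnn.
    have I1 : internal ends (hs |: r :\ g) h' := Cyc_int1 Ch' Nh'.
    have I2 : internal ends r h'.
      apply: conn_subst Ihs _ I1; rewrite setU1K //; exact: subsetDl.
    have Nh'r : h' \notin r.
      by apply/negP => /Hltr L; move: (ltn_trans L Lh'); rewrite ltnn.
    have [_ C'] := factB Hg (eq_leq Hr) Nh'r I2.
    have := Mhs h'; rewrite C' andbT (ltn_trans Lhs Lh') => /(_ isT).
    by rewrite leqNgt Lh'.
  move=> s e H; case: (e =P g) => [Eeg|Neg].
    subst e; have [Es Hm Hn] := Tt_diag H.
    have Eg := ismax_uniq Hm Hmr; subst g.
    by rewrite Hn in Hns.
  have [Ner [Hlt [Cy [Hint [Es [Hgr Hcs]]]]]] := Tt_struct H (introN eqP (nesym Neg)).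
  have Le : (e <= hs)%N by apply: Mhs; rewrite Cy andbT; apply: Hlt.
  have Ee : e = hs.
    apply: val_inj; apply/eqP; rewrite eqn_leq Le /= leqNgt; apply/negP => Lt.
    have Hn := condY_Tt H; case/and3P: Hn => _ _ /negP; apply; apply/existsP; exists hs.
    rewrite Lt /=.
    have Nhs : hs \notin s.
      rewrite Es !inE negb_or negb_and Nhr orbT andbT.
      by apply: contraTneq Lt => ->; rewrite ltnn.
    have I2 : internal ends s hs.
      by apply: conn_subst Hint _ Ihs; rewrite Es; apply/subsetP => z Hz; rewrite setU1r.
    by have [_ C] := factB Hg (eq_leq Hcs) Nhs I2.
  by rewrite Es Ee !eqxx.
rewrite -big_mkcond /=.
have Hc : #|hs |: r| = i.+1 by rewrite cardsU1 Nhr Hr.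
have := Hcoc Hc Chs; rewrite big_setU1 //= setU1K // (sgn_all Hltr) Hr => Hsum.
have Hsum' : \sum_(g in r) sgn (r :\ g) g * a (hs |: r :\ g) = - ((-1) ^+ i * a r).
  apply/eqP; rewrite -addr_eq0 addrC; apply/eqP; rewrite -[RHS]Hsum; congr (_ + _).
  apply: eq_bigr => g Hgr.
  have Ngh : g != hs by apply: contraNneq Nhr => <-.
  by rewrite setD1U1 // sgn_add //; apply: Hltr.
rewrite (eq_bigr (fun g => (-1) ^+ i.-1 * (sgn (r :\ g) g * a (hs |: r :\ g)))); last first.
  move=> g Hgr; rewrite (sgn_all (X := r :\ g) (h := hs)); last first.
    by move=> f; rewrite inE => /andP[_ /Hltr].
  have -> : #|r :\ g| = i.-1 by rewrite (cardsD1 g r) Hgr add1n in Hr; rewrite -Hr.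
  by rewrite -mulrA mulrCA [a _ * _]mulrC.
rewrite -big_distrr /= Hsum' -{2}(prednK Hi0) exprS mulN1r mulNr opprK mulrA.
by rewrite -exprMn mulrNN mulr1 expr1n mul1r.
Qed.

End Core.

End Part3.
Import Part3.

Module Part4.
Set Implicit Arguments.
Unset Strict Implicit.
Unset Printing Implicit Defensive.
Import GRing.Theory.

Section Glue.
Variables (n k : nat) (ends : 'I_k -> 'I_n * 'I_n) (m' i j : nat).
Hypothesis Hg : forall l, has_cycle_of_length ends l -> (i < l)%N.
Hypothesis Hi0 : (0 < i)%N.
Local Notation m := m'.+3.
Local Notation St := (State n k m).
Variable x : {ffun St -> int}.
Hypothesis Hx : in_cochain ends i j x.
Hypothesis Hjle : (m'.+2 * (n - i) <= j)%N.
Implicit Types (X Y s r t : {set 'I_k}) (e f g h : 'I_k).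

Lemma some_eq (T : eqType) (a b : T) : (Some a == Some b) = (a == b).
Proof. by []. Qed.

Lemma topst_eq X Y : (topst ends m' X == topst ends m' Y) = (X == Y).
Proof.
apply/eqP/eqP => [[]//|-> //].
Qed.

Lemma supp st : x st != 0%R ->
  [/\ st = topst ends m' st.1, #|st.1| = i & j = (m'.+2 * (n - i))%N].
Proof.
move=> /Hx /and3P[Hv /eqP Hi /eqP Hj].
case: st Hv Hi Hj => s w /= /forall_inP Hv; rewrite /deg_i /deg_j /= => Hi Hj.
have Hc : #|comps ends s| = (n - i)%N.
  by have := comps_card Hg (eq_leq Hi); rewrite Hi; lia.
have L := @leqif_sum _ (fun C => C \in comps ends s) (fun C => nat_of_ord (w C) == m'.+2)
   (fun C => nat_of_ord (w C)) (fun _ => m'.+2) (fun C _ => leqif_eq (ltnSE (ltn_ord (w C)))).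
rewrite sum_nat_const Hc Hj in L.
have Hj' : j = (m'.+2 * (n - i))%N by apply/eqP; rewrite eqn_leq Hjle mulnC L.1.
have /forall_inP Hall : [forall (C | C \in comps ends s), nat_of_ord (w C) == m'.+2].
  by rewrite -L.2 Hj' mulnC.
split => //.
congr pair; apply/ffunP => C; rewrite /topw ffunE.
case: ifP => HC; apply: val_inj => /=.
  by apply/eqP; apply: Hall.
by apply/eqP; apply: Hv; rewrite HC.
Qed.



Lemma sum_supp (F : St -> int) : (\sum_(st : St) x st * F st =
  \sum_(s : {set 'I_k}) (if #|s| == i then x (topst ends m' s) * F (topst ends m' s) else 0))%R.
Proof.
transitivity (\sum_(s : {set 'I_k}) \sum_(w : {ffun {set 'I_n} -> 'I_m}) x (s, w) * F (s, w))%R.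
  by rewrite pair_big /=; apply: eq_bigr => -[s w].
apply: eq_bigr => s _; rewrite (big1_collapse (i0 := topw ends m' s)).
  case: ifP => // Hs.
  case: (x (topst ends m' s) =P 0%R) => [->|/eqP Hne]; first by rewrite GRing.mul0r.
  by have [_ Hi _] := supp Hne; rewrite Hi eqxx in Hs.
move=> w Hw; have Hne : x (s, w) != 0%R.
  by apply: contraNneq Hw => ->; rewrite GRing.mul0r.
by have [E _ _] := supp Hne; case: E => /= ->.
Qed.

Definition av s := x (topst ends m' s).

Lemma cocycle (Hcx : forall u : St, dmap ends x u = 0%R) t :
  #|t| = i.+1 -> Cyc ends t -> (\sum_(e in t) sgn (t :\ e) e * av (t :\ e) = 0)%R.
Proof.
move=> Ht Ct; have := Hcx (topst ends m' t); rewrite /dmap ffunE sum_supp.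
have E : forall s, (if #|s| == i then x (topst ends m' s) * dcoef ends (topst ends m' s) (topst ends m' t) else 0)%R =
   (\sum_(e < k) (if [&& #|s| == i, e \notin s, internal ends s e & e |: s == t]
                 then x (topst ends m' s) * sgn s e else 0))%R.
  move=> s; rewrite /dcoef big_distrr /= big_mkcond /=.
  case: ifP => Hs; last by rewrite big1 // => e _; case: ifP.
  apply: eq_bigr => e _; rewrite d_e_top /=.
  case: (e \in s) => //=; case: (internal ends s e) => //=.
    rewrite some_eq topst_eq; case: (e |: s == t); first by rewrite GRing.mulr1. 
    by rewrite !GRing.mulr0.
  by rewrite !GRing.mulr0.
rewrite (eq_bigr _ (fun s _ => E s)) exchange_big /= => H0.
rewrite -[RHS]H0 big_mkcond /=; apply: eq_bigr => e _.
rewrite (big1_collapse (i0 := t :\ e)); last first.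
  move=> s; case: ifP => [/and4P[_ Hes _ /eqP Et] _|]; last by rewrite eqxx.
  by rewrite -Et setU1K.
case: (boolP (e \in t)) => He.
  have Hc : #|t :\ e| == i by rewrite (cardsD1 e t) He add1n in Ht; case: Ht => ->.
  by rewrite Hc setD11 (Cyc_int Ct He) setD1K // eqxx /= GRing.mulrC.
case: ifP => // /and4P[_ _ _ /eqP Et].
by case/negP: He; rewrite -Et setU11.
Qed.

Lemma condY_facts s e : condY ends i s e -> [/\ #|s| = i, e \in s & #|s :\ e| = i.-1].
Proof.
case/and3P => /eqP Hs /andP[He _] _; split => //.
by move: Hs; rewrite (cardsD1 e s) He add1n => <-.
Qed.

Lemma dcoefY s e (t : St) : condY ends i s e -> dcoef ends (Ys ends m' s e) t =
  (\sum_(g < k | g \notin s :\ e) sgn (s :\ e) g *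
     (if internal ends s g && (topst ends m' (g |: (s :\ e)) == t) then 1 else 0))%R.
Proof.
move=> /condY_facts [Hs He Hc]; rewrite /dcoef; apply: eq_bigr => g Hg'.
rewrite (d_e_Y m' Hg) //; last by rewrite Hc prednK.
by case: (internal ends s g).
Qed.

Definition yv : {ffun St -> int} := [ffun st => (\sum_(s : {set 'I_k}) \sum_(e < k)
   (if condY ends i s e then av s * sgn (s :\ e) e * (if st == Ys ends m' s e then 1 else 0) else 0))%R].

Lemma y_cochain : in_cochain ends i.-1 j yv.
Proof.
move=> st Hst.
case: (pickP (fun p : {set 'I_k} * 'I_k => [&& condY ends i p.1 p.2, av p.1 != 0%R & st == Ys ends m' p.1 p.2])) => [[s e] /and3P[HY Ha /eqP ->]|H0]; last first.
  case/negP: Hst; rewrite ffunE big1 // => s _; rewrite big1 // => e _.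
  have := H0 (s, e); rewrite /=; case: ifP => // HY.
  case: (av s =P 0%R) => [->|/eqP Ha]; first by rewrite !GRing.mul0r.
  by case: (st == Ys ends m' s e) => //=; rewrite GRing.mulr0.
rewrite /=.
have [_ _ Hj] := supp Ha.
have [Hs He Hc] := condY_facts HY.
set X := s :\ e in Hc *.
have NeX : e \notin X by rewrite setD11.
have NiX : ~~ internal ends X e.
  by apply/negP => Hi; have := int_card Hg NeX Hi; rewrite Hc; lia.
set C1 := Defs.comp ends X (ends e).1; set C2 := Defs.comp ends X (ends e).2.
have N12 : C1 != C2 by rewrite comp_eqP.
have HC1 : C1 \in comps ends X by apply: in_comps.
have HC2 : C2 \in comps ends X by apply: in_comps.
apply/and3P; split.
- apply/forall_inP => C HC; rewrite /Ys /Yw /= ffunE -/X -/C1 -/C2.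
  case: (C =P C1) => [E|_]; first by rewrite E HC1 in HC.
  case: (C =P C2) => [E|_]; first by rewrite E HC2 in HC.
  by rewrite (negbTE HC).
- by rewrite /deg_i /= Hc.
rewrite /deg_j /= -/X.
rewrite (eq_bigr (fun C => Wv m' C1 C2 C)); last by move=> C HC; rewrite Yw_val.
rewrite (big_setD1 C1) //= (big_setD1 C2) /=; last by rewrite !inE eq_sym N12.
rewrite (eq_bigr (fun _ => m'.+2)); last first.
  by move=> C; rewrite !inE /Wv => /and3P[/negbTE -> /negbTE -> _].
rewrite sum_nat_const /Wv eqxx (eq_sym C2 C1) (negbTE N12) eqxx.
have Hcc := comps_card Hg (X := X) (leq_trans (eq_leq Hc) (leq_pred i)).
rewrite Hc (cardsD1 C1) HC1 (cardsD1 C2 (comps ends X :\ C1)) !inE eq_sym N12 HC2 /= in Hcc.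
set c := #|_ :\ C2| in Hcc *.
have Hni : (n - i = c.+1)%N by move: Hcc Hi0; lia.
by rewrite Hj Hni mulnS; lia.
Qed.

Lemma dmap_y (Hcx : forall u : St, dmap ends x u = 0%R) (t : St) : dmap ends yv t = x t.
Proof.
rewrite /dmap ffunE.
transitivity (\sum_(s : {set 'I_k}) \sum_(e < k) (if condY ends i s e then av s * sgn (s :\ e) e * dcoef ends (Ys ends m' s e) t else 0))%R.
  rewrite (eq_bigr (fun st => \sum_(s : {set 'I_k}) \sum_(e < k) (if condY ends i s e then av s * sgn (s :\ e) e * (if st == Ys ends m' s e then 1 else 0) * dcoef ends st t else 0)))%R; last first.
    move=> st _; rewrite ffunE big_distrl /=; apply: eq_bigr => s _; rewrite big_distrl /=; apply: eq_bigr => e _.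
    by case: ifP; rewrite ?GRing.mul0r.
  rewrite exchange_big /=; apply: eq_bigr => s _; rewrite exchange_big /=; apply: eq_bigr => e _.
  rewrite (big1_collapse (i0 := Ys ends m' s e)); first by case: ifP => //; rewrite eqxx GRing.mulr1.
  move=> st; case: ifP => _; last by rewrite eqxx.
  by case: (st =P Ys ends m' s e) => [->|_]; rewrite ?eqxx // GRing.mulr0 GRing.mul0r eqxx.
case: (boolP (t == topst ends m' t.1)) => Ht; last first.
  case: (x t =P 0%R) => [->|/eqP Hne]; last by have [E _ _] := supp Hne; rewrite -E eqxx in Ht.
  rewrite big1 // => s _; rewrite big1 // => e _; case: ifP => // HY.
  rewrite dcoefY // big1 ?GRing.mulr0 // => g _.
  case: (topst ends m' (g |: s :\ e) =P t) => [E|_]; first by rewrite -E /= eqxx in Ht.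
  by rewrite andbF GRing.mulr0.
move/eqP: Ht => Ht; rewrite Ht; set r := t.1.
transitivity (\sum_(s : {set 'I_k}) \sum_(e < k) \sum_(g < k) Tt ends i av r s e g)%R.
  apply: eq_bigr => s _; apply: eq_bigr => e _; rewrite /Tt.
  case: (boolP (condY ends i s e)) => HY /=; last by rewrite big1.
  rewrite dcoefY // big_distrr /= big_mkcond /=; apply: eq_bigr => g _.
  rewrite topst_eq; case: (g \notin s :\ e) => //=; case: (internal ends s g) => //=;
    case: (_ == r) => /=; by rewrite ?GRing.mulr1 ?GRing.mulr0 ?GRing.mulrA.
case: (boolP (#|r| == i)) => Hr.
  by rewrite (core Hg Hi0 (cocycle Hcx) (eqP Hr)).
case: (x (topst ends m' r) =P 0%R) => [->|/eqP Hne]; last first.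
  by have [_ Hc _] := supp Hne; rewrite Hc eqxx in Hr.
rewrite big1 // => s _; rewrite big1 // => e _; rewrite big1 // => g _.
rewrite /Tt; case: ifP => // /and4P[HY Hg' _ /eqP Er].
have [_ _ Hc] := condY_facts HY.
by case/negP: Hr; rewrite -Er cardsU1 Hg' Hc add1n prednK.
Qed.
End Glue.

End Part4.
Import Part4.

Unset Implicit Arguments.

Theorem proposition2p8 (n k : nat) (ends : 'I_k -> 'I_n * 'I_n) (m i j : nat) :
  (3 <= m)%N -> (0 < i)%N ->
  (forall l, has_cycle_of_length ends l -> (i < l)%N) ->
  ((m - 1) * (n - i) <= j)%N ->
  @H_vanishes n k m ends i j.
Proof.
case: m => [|[|[|m']]] // _ Hi0 Hg Hj x Hx Hcx.
have Hj' : (m'.+2 * (n - i) <= j)%N by move: Hj; rewrite subn1.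
exists (yv ends i x); split.
  exact: (y_cochain Hg Hi0 Hx Hj').
exact: (dmap_y Hg Hi0 Hx Hj' Hcx).
Qed.
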